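(* Let $A=(a_{\ell,r})$ be an $n\times n$ flat matrix and $H=(h_{\ell,k})$ an $n\times n$ matrix whose entries all have absolute value $1$ and whose rows are pairwise orthogonal. For $r=1,\dots,n$ let $M_r$ be the $n\times n$ matrix with entries $(M_r)_{\ell,k}=\frac1{\sqrt n}a_{\ell,r}h_{\ell,k}$, i.e. $M_r=\frac1{\sqrt n}\operatorname{diag}(v_r)H$ where $v_r$ is the $r$-th column of $A$. Then $\{M_1,\dots,M_n\}$ is a complete system of mutually unbiased Hadamards if and only if every pair of distinct vertices of the vertex set $V_n$ is adjacent in $L(A)$ or in $L(H)$ (i.e. $L(A)$ and $L(H)$ together cover the complete graph on $V_n$).
   Context: A flat matrix is a complex matrix all of whose entries have absolute value $1$. For an $n\times n$ complex matrix $C$ with rows $c_1,\dots,c_n$, its L-graph $L(C)$ is the simple graph on the vertex set $V_n$ of all 2-element multisets $\{i,j\}$ with $1\le i\le j\le n$, in which distinct vertices $\{i,j\}$ and $\{k,l\}$ are adjacent iff $\langle c_i\circ c_j | c_k\circ c_l\rangle=0$; here $\circ$ is the entrywise product and $\langle x|y\rangle=\sum_t\overline{x_t}y_t$. A complex Hadamard matrix is a unitary $n\times n$ matrix all of whose entries have absolute value $1/\sqrt n$; two are mutually unbiased if $|\langle x|y\rangle|=1/\sqrt n$ for every column $x$ of one and column $y$ of the other; a complete system of mutually unbiased Hadamards is a set of $n$ pairwise mutually unbiased complex Hadamard $n\times n$ matrices. *)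

(* Defs.v *)
From HB Require Import structures.
From mathcomp Require Import all_boot all_order all_algebra all_field.
Set Implicit Arguments. Unset Strict Implicit. Unset Printing Implicit Defensive.
Import Order.TTheory GRing.Theory Num.Theory.
Local Open Scope ring_scope.

Definition ip n (x y : 'I_n -> algC) : algC := \sum_(t < n) (x t)^* * y t.

Definition hprod n (x y : 'I_n -> algC) : 'I_n -> algC := fun t => x t * y t.

Definition rowv n (C : 'M[algC]_n) (i : 'I_n) : 'I_n -> algC := fun t => C i t.
Definition colv n (C : 'M[algC]_n) (j : 'I_n) : 'I_n -> algC := fun t => C t j.

Definition flat n (C : 'M[algC]_n) : Prop := forall i j, `|C i j| = 1.

Definition ctrans n (C : 'M[algC]_n) : 'M[algC]_n := \matrix_(i, j) (C j i)^*.

Definition unitary n (C : 'M[algC]_n) : Prop :=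
  C *m ctrans C = 1%:M /\ ctrans C *m C = 1%:M.

Definition complex_hadamard n (C : 'M[algC]_n) : Prop :=
  unitary C /\ forall i j, `|C i j| = (sqrtC n%:R)^-1.

Definition mutually_unbiased n (C D : 'M[algC]_n) : Prop :=
  forall j k, `| ip (colv C j) (colv D k) | = (sqrtC n%:R)^-1.

Definition complete_MUH_system n (M : 'I_n -> 'M[algC]_n) : Prop :=
  (forall r, complex_hadamard (M r)) /\
  (forall r s, r != s -> mutually_unbiased (M r) (M s)).

(* vertices of V_n: 2-element multisets {i,j}, encoded as pairs (i,j) with i <= j *)
Definition vertex n (v : 'I_n * 'I_n) : bool := (v.1 <= v.2)%N.

(* adjacency in the L-graph L(C) (for distinct vertices) *)
Definition Ladj n (C : 'M[algC]_n) (v w : 'I_n * 'I_n) : bool :=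
  ip (hprod (rowv C v.1) (rowv C v.2)) (hprod (rowv C w.1) (rowv C w.2)) == 0.

Definition Mr n (A H : 'M[algC]_n) (r : 'I_n) : 'M[algC]_n :=
  \matrix_(l, k) ((sqrtC n%:R)^-1 * A l r * H l k).

(* Main.v *)
Require Import Defs.
From HB Require Import structures.
From mathcomp Require Import all_boot all_order all_algebra all_field.
From Stdlib Require Import ArithRing.
Set Implicit Arguments. Unset Strict Implicit. Unset Printing Implicit Defensive.
Import Order.TTheory GRing.Theory Num.Theory.
Local Open Scope ring_scope.

Lemma expand_sq (I J K : finType) (P : pred K) (a : K -> I -> algC) (b : K -> J -> algC) :
  \sum_i \sum_j (\sum_(k | P k) a k i * b k j) * (\sum_(k | P k) a k i * b k j)^*
  = \sum_(k | P k) \sum_(k' | P k') (\sum_i a k i * (a k' i)^*) * (\sum_j b k j * (b k' j)^*).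
Proof.
transitivity (\sum_i \sum_j \sum_(k | P k) \sum_(k' | P k') (a k i * (a k' i)^*) * (b k j * (b k' j)^*)).
  apply: eq_bigr => i _; apply: eq_bigr => j _.
  rewrite rmorph_sum /= big_distrlr /=; apply: eq_bigr => k _; apply: eq_bigr => k' _.
  by rewrite rmorphM /= mulrACA.
rewrite (exchange_big) /=.
transitivity (\sum_j \sum_(k | P k) \sum_(k' | P k') \sum_i (a k i * (a k' i)^*) * (b k j * (b k' j)^*)).
  apply: eq_bigr => j _; rewrite exchange_big /=; apply: eq_bigr => k _.
  by rewrite exchange_big.
rewrite exchange_big /=; apply: eq_bigr => k _.
rewrite exchange_big /=; apply: eq_bigr => k' _.
rewrite big_distrlr /=; rewrite exchange_big /=; apply: eq_bigr => i _.
by apply: eq_bigr.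
Qed.

Lemma pair_conj n (f g : 'I_n -> algC) :
  \sum_(i : 'I_n * 'I_n) (f i.1 * (f i.2)^*) * (g i.1 * (g i.2)^*)^*
  = (\sum_r f r * (g r)^*) * (\sum_r f r * (g r)^*)^*.
Proof.
rewrite -(pair_big xpredT xpredT (fun r s => (f r * (f s)^*) * (g r * (g s)^*)^*)) /=.
rewrite rmorph_sum big_distrlr /=; apply: eq_bigr => r _; apply: eq_bigr => s _.
by rewrite !rmorphM /= !conjCK mulrACA.
Qed.

Lemma unit_conj (x : algC) : `|x| = 1 -> x * x^* = 1.
Proof. by move=> h; rewrite -normCK h expr1n. Qed.
Lemma unit_conj' (x : algC) : `|x| = 1 -> x^* * x = 1.
Proof. by move=> h; rewrite mulrC unit_conj. Qed.

Definition fv n (C : 'M[algC]_n) (k : 'I_n * 'I_n) (r : 'I_n) := (C k.1 r)^* * C k.2 r.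
Definition av n (C : 'M[algC]_n) (k i : 'I_n * 'I_n) := fv C k i.1 * (fv C k i.2)^*.
Definition Yv n (A H : 'M[algC]_n) (i j : 'I_n * 'I_n) :=
  \sum_l (A l i.1 * H l j.1)^* * (A l i.2 * H l j.2).
Definition Gv n (A H : 'M[algC]_n) (i j : 'I_n * 'I_n) :=
  \sum_(k | k.1 != k.2) av A k i * av H k j.
Definition Wv n (C : 'M[algC]_n) (k k' : 'I_n * 'I_n) :=
  ip (hprod (rowv C k.1) (rowv C k'.2)) (hprod (rowv C k.2) (rowv C k'.1)).

Lemma av_diag n (C : 'M[algC]_n) l i : flat C -> av C (l, l) i = 1.
Proof.
move=> fC; rewrite /av /fv /= !unit_conj' ?rmorph1 ?mulr1 //.
Qed.

Lemma acaca (a b c d e f g h : algC) :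
  ((a*b)*(c*d))*((e*f)*(g*h)) = ((a*e)*(c*g))*((b*f)*(d*h)).
Proof.
by rewrite (mulrACA a b c d) (mulrACA e f g h) (mulrACA (a*c)) (mulrACA a c e g) (mulrACA b d f h).
Qed.

Lemma YG n (A H : 'M[algC]_n) i j : flat A -> flat H ->
  Yv A H i j * (Yv A H i j)^* = n%:R + Gv A H i j.
Proof.
move=> fA fH.
have E : forall l m, ((A l i.1 * H l j.1)^* * (A l i.2 * H l j.2)) *
     ((A m i.1 * H m j.1)^* * (A m i.2 * H m j.2))^* = av A (l, m) i * av H (l, m) j.
  move=> l m; rewrite /av /fv /= !rmorphM /= !conjCK.
  by rewrite acaca.
rewrite /Yv rmorph_sum big_distrlr /=.
transitivity (\sum_l (1 + \sum_(m | m != l) av A (l, m) i * av H (l, m) j)).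
  apply: eq_bigr => l _; rewrite (bigD1 l) //= E !av_diag // mulr1; congr (_ + _).
  by apply: eq_bigr => m _; rewrite E.
rewrite big_split /= sumr_const card_ord; congr (_ + _).
rewrite /Gv (pair_big_dep xpredT (fun l m => m != l) (fun l m => av A (l, m) i * av H (l, m) j)) /=.
by apply: eq_big => [[l m]|[l m]] //=; rewrite eq_sym.
Qed.

Lemma pairW n (C : 'M[algC]_n) k k' :
  \sum_i av C k i * (av C k' i)^* = Wv C k k' * (Wv C k k')^*.
Proof.
rewrite /av pair_conj; congr (_ * _^*); apply: eq_bigr => r _;
rewrite /fv /hprod /rowv !rmorphM /= !conjCK -!mulrA; congr (_ * _);
by rewrite mulrA mulrC.
Qed.

Lemma sinv_conj n : ((sqrtC n%:R)^-1 : algC)^* = (sqrtC n%:R)^-1.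
Proof. by apply: geC0_conj; rewrite invr_ge0 sqrtC_ge0 ler0n. Qed.

Lemma sinv_sq n : ((sqrtC n%:R)^-1 * (sqrtC n%:R)^-1 : algC) = (n%:R)^-1.
Proof. by rewrite -invfM -expr2 sqrtCK. Qed.

Lemma Mr_had n (A H : 'M[algC]_n) r : flat A -> flat H ->
  (forall i k : 'I_n, i != k -> ip (rowv H i) (rowv H k) = 0) ->
  complex_hadamard (Mr A H r).
Proof.
move=> fA fH oH.
have n0 : (0 < n)%N := leq_ltn_trans (leq0n r) (ltn_ord r).
have nz : (n%:R : algC) != 0 by rewrite pnatr_eq0 -lt0n.
have U : Mr A H r *m ctrans (Mr A H r) = 1%:M.
  apply/matrixP => l l'; rewrite !mxE.
  transitivity ((sqrtC n%:R)^-1 * ((sqrtC n%:R)^-1)^* * (A l r * (A l' r)^*) *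
                 ip (rowv H l') (rowv H l)).
    rewrite /ip big_distrr /=; apply: eq_bigr => k _.
    rewrite !mxE /rowv !rmorphM /= -!mulrA; congr (_ * _).
    rewrite (mulrCA (H l k)) (mulrCA (A l r)); congr (_ * (_ * _)).
    by rewrite mulrCA [H l k * _]mulrC.
  case: (eqVneq l l') => [<-|ne]; last by rewrite oH 1?eq_sym // mulr0.
  rewrite unit_conj // mulr1 sinv_conj sinv_sq /ip.
  under eq_bigr => k _ do rewrite /rowv unit_conj' //.
  by rewrite sumr_const card_ord mulVf.
split; first by split => //; apply: mulmx1C.
move=> i j; rewrite mxE !normrM fA fH !mulr1 normfV ger0_norm // sqrtC_ge0 ler0n. done.
Qed.

Lemma ipY n (A H : 'M[algC]_n) r s j k :
  ip (colv (Mr A H r) j) (colv (Mr A H s) k) = (n%:R)^-1 * Yv A H (r, s) (j, k).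
Proof.
rewrite /ip /Yv big_distrr /=; apply: eq_bigr => l _.
rewrite /colv !mxE -!mulrA rmorphM /= sinv_conj -mulrA -sinv_sq -mulrA; congr (_ * _).
rewrite mulrCA; congr (_ * _); rewrite rmorphM /= -mulrA; by congr (_ * _).
Qed.

Lemma norm_crit n (Y : algC) : (0 < n)%N ->
  (`|(n%:R)^-1 * Y| = (sqrtC n%:R)^-1) <-> Y * Y^* = n%:R.
Proof.
move=> n0.
have nz : (n%:R : algC) != 0 by rewrite pnatr_eq0 -lt0n.
have snz : sqrtC (n%:R : algC) != 0 by rewrite sqrtC_eq0.
have ns : (n%:R : algC) = sqrtC n%:R * sqrtC n%:R by rewrite -expr2 sqrtCK.
rewrite normrM normfV normr_nat -normCK.
split => [h|h].
  have : `|Y| = sqrtC n%:R.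
    by rewrite -[LHS](mulVKf nz) h {1}ns -mulrA mulfV // mulr1.
  by move=> ->; rewrite sqrtCK.
have : `|Y| = sqrtC n%:R by rewrite -h sqrCK.
by move=> ->; rewrite {1}ns invfM -mulrA mulVf // mulr1.
Qed.

Lemma Ydiag n (A H : 'M[algC]_n) r j k : flat A -> flat H ->
  (forall i k : 'I_n, i != k -> ip (rowv H i) (rowv H k) = 0) ->
  Yv A H (r, r) (j, k) = n%:R * (j == k)%:R.
Proof.
move=> fA fH oH.
have n0 : (0 < n)%N := leq_ltn_trans (leq0n r) (ltn_ord r).
have nz : (n%:R : algC) != 0 by rewrite pnatr_eq0 -lt0n.
have [[_ U] _] := Mr_had r fA fH oH.
have := congr1 (fun M : 'M[algC]_n => M j k) U; rewrite !mxE.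
have -> : \sum_l ctrans (Mr A H r) j l * Mr A H r l k =
   ip (colv (Mr A H r) j) (colv (Mr A H r) k).
  by apply: eq_bigr => l _; rewrite mxE.
by rewrite ipY => h; rewrite -h mulVKf.
Qed.

Lemma Gdiag n (A H : 'M[algC]_n) r j k : flat A -> flat H ->
  (forall i k : 'I_n, i != k -> ip (rowv H i) (rowv H k) = 0) ->
  Gv A H (r, r) (j, k) * (Gv A H (r, r) (j, k))^* =
  if j == k then ((n * n - n) * (n * n - n))%:R else (n * n)%:R.
Proof.
move=> fA fH oH.
have := YG (r, r) (j, k) fA fH; rewrite Ydiag //.
have e : forall x : algC, n%:R + x = x + n%:R by move=> x; rewrite addrC.
case: (eqVneq j k) => _; rewrite ?mulr1 ?mulr0 ?mul0r ?rmorph0 ?mul0r e => /eqP.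
  rewrite conjC_nat -natrM -subr_eq -natrB ?leq_pmulr // => [/eqP <-|].
    by rewrite conjC_nat natrM.
  by case: (n) r => [[]|].
rewrite eq_sym addr_eq0 => /eqP ->.
by rewrite rmorphN /= conjC_nat mulrNN natrM.
Qed.

Lemma sum_if n (c1 c2 : algC) :
  \sum_(j : 'I_n * 'I_n) (if j.1 == j.2 then c1 else c2) = (c1 + c2 *+ n.-1) *+ n.
Proof.
rewrite -(pair_bigA _ (fun a b => if a == b then c1 else c2)) /=.
rewrite -[n in _ *+ n]card_ord -sumr_const; apply: eq_bigr => a _.
rewrite (bigD1 a) //= eqxx; congr (_ + _).
rewrite (eq_bigr (fun _ => c2)); last by move=> b; rewrite eq_sym => /negbTE ->.
rewrite (eq_bigl (predC1 a)); last by move=> b /=.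
by rewrite sumr_const cardC1 card_ord.
Qed.

Lemma sum_off n (c : algC) :
  \sum_(k : 'I_n * 'I_n | k.1 != k.2) c = c *+ n.-1 *+ n.
Proof.
rewrite -(pair_big_dep xpredT (fun a b => a != b) (fun _ _ => c)) /=.
rewrite -[n in _ *+ n]card_ord -sumr_const; apply: eq_bigr => a _.
rewrite (eq_bigl (predC1 a)); last by move=> b /=; rewrite eq_sym.
by rewrite sumr_const cardC1 card_ord.
Qed.

Lemma av_unit n (C : 'M[algC]_n) k i : flat C -> av C k i * (av C k i)^* = 1.
Proof.
move=> fC; apply: unit_conj.
by rewrite /av /fv !normrM !norm_conjC !fC !normrM !norm_conjC !fC !mulr1.
Qed.

Definition Tv n (A H : 'M[algC]_n) k k' :=
  (Wv A k k' * (Wv A k k')^*) * (Wv H k k' * (Wv H k k')^*).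

Lemma main_id n (A H : 'M[algC]_n) : flat A -> flat H ->
  (forall i k : 'I_n, i != k -> ip (rowv H i) (rowv H k) = 0) ->
  \sum_(i | i.1 != i.2) \sum_j Gv A H i j * (Gv A H i j)^* =
  \sum_(k : 'I_n * 'I_n | k.1 != k.2) \sum_(k' | (k'.1 != k'.2) && (k' != k)) Tv A H k k'.
Proof.
move=> fA fH oH.
have tot : \sum_(i | i.1 == i.2) \sum_j Gv A H i j * (Gv A H i j)^* +
   \sum_(i | i.1 != i.2) \sum_j Gv A H i j * (Gv A H i j)^* =
   \sum_(k : 'I_n * 'I_n | k.1 != k.2) \sum_(k' | k'.1 != k'.2)
     (\sum_i av A k i * (av A k' i)^*) * (\sum_j av H k j * (av H k' j)^*).
  by rewrite -(expand_sq (fun k : 'I_n * 'I_n => k.1 != k.2) (av A) (av H)) [RHS](bigID (fun i : 'I_n * 'I_n => i.1 == i.2)) /=.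
have R : \sum_(k : 'I_n * 'I_n | k.1 != k.2) \sum_(k' | k'.1 != k'.2)
     (\sum_i av A k i * (av A k' i)^*) * (\sum_j av H k j * (av H k' j)^*) =
   (n * n)%:R * (n * n)%:R *+ n.-1 *+ n +
   \sum_(k : 'I_n * 'I_n | k.1 != k.2) \sum_(k' | (k'.1 != k'.2) && (k' != k)) Tv A H k k'.
  rewrite -sum_off -big_split /=; apply: eq_bigr => k offk.
  rewrite (bigD1 k) //=; congr (_ + _).
    rewrite (eq_bigr (fun _ => 1)); last by move=> *; rewrite av_unit.
    rewrite [X in _ * X](eq_bigr (fun _ => 1)); last by move=> *; rewrite av_unit.
    by rewrite sumr_const card_prod card_ord.
  by apply: eq_bigr => k' _; rewrite /Tv !pairW.
rewrite R in tot; move: tot.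
suff -> : \sum_(i | i.1 == i.2) \sum_j Gv A H i j * (Gv A H i j)^* =
          (n * n)%:R * (n * n)%:R *+ n.-1 *+ n by move/addrI.
rewrite -(pair_big_dep xpredT (fun a b => a == b)
   (fun a b => \sum_j Gv A H (a, b) j * (Gv A H (a, b) j)^*)) /=.
rewrite -[n in _ *+ n]card_ord -sumr_const; apply: eq_bigr => r _.
rewrite (eq_bigl (pred1 r)); last by move=> b /=; rewrite eq_sym.
rewrite big_pred1_eq.
rewrite (eq_bigr (fun j : 'I_n * 'I_n => if j.1 == j.2 then ((n * n - n) * (n * n - n))%:R
    else (n * n)%:R)); last by move=> [j k] _; rewrite Gdiag.
rewrite sum_if -natrM -!mulrnA -natrD -mulrnA; congr (_%:R).
clear R; case: n A H fA fH oH r => [|p] /= *; first by [].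
have -> : (p.+1 * p.+1 - p.+1 = p.+1 * p)%N by rewrite -{3}(muln1 p.+1) -mulnBr subn1.
rewrite -!multE -!plusE; ring.
Qed.

Definition sortp n (p : 'I_n * 'I_n) : 'I_n * 'I_n :=
  if (p.1 <= p.2)%N then p else (p.2, p.1).

Lemma ip_hC1 n (a b u : 'I_n -> algC) : ip (hprod a b) u = ip (hprod b a) u.
Proof. by rewrite /ip; apply: eq_bigr => t _; rewrite /hprod [a t * _]mulrC. Qed.
Lemma ip_hC2 n (a b u : 'I_n -> algC) : ip u (hprod a b) = ip u (hprod b a).
Proof. by rewrite /ip; apply: eq_bigr => t _; rewrite /hprod [a t * _]mulrC. Qed.

Lemma Ladj_sort n (C : 'M[algC]_n) x y z w :
  Ladj C (sortp (x, y)) (sortp (z, w)) =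
  (ip (hprod (rowv C x) (rowv C y)) (hprod (rowv C z) (rowv C w)) == 0).
Proof.
rewrite /Ladj /sortp /=; case: ifP => _; case: ifP => _ //=.
- by rewrite ip_hC2.
- by rewrite ip_hC1.
- by rewrite ip_hC1 ip_hC2.
Qed.

Lemma vertex_sort n (p : 'I_n * 'I_n) : vertex (sortp p).
Proof.
rewrite /vertex /sortp; case: ifP => //= /negbT; rewrite -ltnNge; exact: ltnW.
Qed.

Lemma sort_ne n (l m l' m' : 'I_n) : l != m -> l' != m' -> (l', m') != (l, m) ->
  sortp (l, m') != sortp (m, l').
Proof.
move=> h1 h2 h3; apply/eqP; rewrite /sortp /=.
case: ifP => _; case: ifP => _ [] e1 e2.
- by rewrite e1 eqxx in h1.
- by rewrite e1 -e2 eqxx in h3.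
- by rewrite e1 e2 eqxx in h3.
- by rewrite e2 eqxx in h1.
Qed.

Lemma H_shared1 n (H : 'M[algC]_n) a b c : flat H ->
  (forall i k : 'I_n, i != k -> ip (rowv H i) (rowv H k) = 0) -> b != c ->
  ip (hprod (rowv H a) (rowv H b)) (hprod (rowv H a) (rowv H c)) = 0.
Proof.
move=> fH oH bc; rewrite -(oH _ _ bc); apply: eq_bigr => t _.
by rewrite /hprod /rowv rmorphM /= mulrACA unit_conj' // mul1r.
Qed.

Lemma H_shared2 n (H : 'M[algC]_n) a b c : flat H ->
  (forall i k : 'I_n, i != k -> ip (rowv H i) (rowv H k) = 0) -> b != c ->
  ip (hprod (rowv H b) (rowv H a)) (hprod (rowv H c) (rowv H a)) = 0.
Proof.
by move=> fH oH bc; rewrite ip_hC1 ip_hC2; apply: H_shared1.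
Qed.

Lemma MU_G n (A H : 'M[algC]_n) r s : (0 < n)%N -> flat A -> flat H ->
  mutually_unbiased (Mr A H r) (Mr A H s) <-> forall j k, Gv A H (r, s) (j, k) = 0.
Proof.
move=> n0 fA fH; split => h j k.
  have := h j k; rewrite ipY (norm_crit _ n0) YG // => e.
  by apply: (@addrI _ n%:R); rewrite e addr0.
by rewrite ipY (norm_crit _ n0) YG // h addr0.
Qed.

Unset Implicit Arguments.

Theorem proposition7 (n : nat) (A H : 'M[algC]_n) :
  flat A ->
  flat H ->
  (forall i k : 'I_n, i != k -> ip (rowv H i) (rowv H k) = 0) ->
  (complete_MUH_system (Mr A H) <->
   (forall v w : 'I_n * 'I_n, vertex v -> vertex w -> v != w ->
      Ladj A v w || Ladj H v w)).
Proof.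
move=> fA fH oH.
case: (posnP n) => [n0|n0].
  subst n; split=> [_ [[]] //|_]; split=> [[]|[]] //.
have Tnn : forall k k', 0 <= Tv A H k k'.
  by move=> k k'; rewrite /Tv mulr_ge0 // mul_conjC_ge0.
have Dnn : forall i, 0 <= \sum_j Gv A H i j * (Gv A H i j)^*.
  by move=> i; apply: sumr_ge0 => j _; apply: mul_conjC_ge0.
have ME := main_id fA fH oH.
split.
  case=> _ MU.
  have D0 : \sum_(i | i.1 != i.2) \sum_j Gv A H i j * (Gv A H i j)^* = 0.
    apply: big1 => [[r s]] /= rs; apply: big1 => [[j k]] _.
    by have /(MU_G r s n0 fA fH) -> := MU r s rs; rewrite mul0r.
  rewrite ME in D0.
  have T0 : forall k k', k.1 != k.2 -> k'.1 != k'.2 -> k' != k -> Tv A H k k' = 0.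
    move=> k k' h1 h2 h3.
    have e := psumr_eq0P (fun k _ => sumr_ge0 _ (fun k' (_ : (k'.1 != k'.2) && (k' != k)) => Tnn k k')) D0 h1.
    by apply: (psumr_eq0P _ e) => [*|]; [exact: Tnn | rewrite h2 h3].
  have WT : forall k k', k.1 != k.2 -> k'.1 != k'.2 -> k' != k ->
      (Wv A k k' == 0) || (Wv H k k' == 0).
    move=> k k' h1 h2 h3; have /eqP := T0 k k' h1 h2 h3.
    by rewrite /Tv !mulf_eq0 !conjC_eq0 !orbb.
  move=> [v1 v2] [w1 w2]; rewrite /vertex /= => vv ww vw.
  case: (eqVneq v1 w1) => [e1|n1].
    apply/orP; right; rewrite /Ladj /= e1 H_shared1 //.
    by apply: contra vw => /eqP <-; rewrite e1.
  case: (eqVneq v2 w2) => [e2|n2].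
    by apply/orP; right; rewrite /Ladj /= e2 H_shared2.
  have k'k : (w2, v2) != (v1, w1).
    apply/eqP => -[e3 e4].
    have h1 : (v1 <= w1)%N by rewrite -e4.
    have h2 : (w1 <= v1)%N by rewrite -e3.
    have : v1 = w1 by apply/val_inj/anti_leq; rewrite h1 h2.
    by move/eqP; rewrite (negbTE n1).
  have n2' : (w2, v2).1 != (w2, v2).2 by rewrite /= eq_sym.
  have := WT (v1, w1) (w2, v2) n1 n2' k'k.
  by rewrite /Wv /Ladj.
move=> G; split => [r|r s rs]; first exact: Mr_had.
apply/(MU_G r s n0 fA fH) => j k.
have E0 : \sum_(k : 'I_n * 'I_n | k.1 != k.2)
    \sum_(k' | (k'.1 != k'.2) && (k' != k)) Tv A H k k' = 0.
  apply: big1 => [[l m]] /= lm; apply: big1 => [[l' m']] /andP[/= lm' ne].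
  have := G _ _ (vertex_sort (l, m')) (vertex_sort (m, l')) (sort_ne lm lm' ne).
  rewrite !Ladj_sort => /orP[] /eqP e.
    by rewrite /Tv /Wv /= e mul0r mul0r.
  by rewrite /Tv /Wv /= e mul0r mulr0.
rewrite -ME in E0.
have := psumr_eq0P (fun i _ => Dnn i) E0 (i := (r, s)) rs.
move/(psumr_eq0P (fun j _ => mul_conjC_ge0 _)) => /(_ (j, k) isT) /eqP.
by rewrite mulf_eq0 conjC_eq0 orbb => /eqP.
Qed.
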